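(* Let $X\subset L^2(\Omega)$ be a Hilbert space of functions on a bounded domain $\Omega\subset\mathbb{R}^d$ with continuous embedding, let $k>0$, let $a^{n+1}$ be a bounded bilinear form on $X$, and set $B_n(U,V)=(U,V)+k\,a^{n+1}(U,V)$, assumed coercive on $X$. Let $K$ be an element of a triangulation of $\Omega$ and let $\tilde X_K$ be a closed subspace of $X$ consisting of functions supported in $K$. Let $R\in \tilde X_K'$ and let $\tilde U_K\in\tilde X_K$ be the unique element with $B_n(\tilde U_K,\tilde V)=\langle R,\tilde V\rangle$ for all $\tilde V\in\tilde X_K$. Let $p\in C^1(\bar K)$ with $p>0$ on $\bar K$, and assume there is a family $\{\hat z_j\}_{j\in\mathbb N}\subset\tilde X_K$ and real numbers $\lambda_j$ such that: (i) each $\hat z_j$ is an eigenfunction of the operator associated with $a^{n+1}$ on $\tilde X_K$, i.e. $a^{n+1}(\hat z_j,\tilde V)=\lambda_j(\hat z_j,\tilde V)_{L^2(K)}$ for all $\tilde V\in\tilde X_K$; (ii) $\{\hat z_j\}$ is an orthonormal system in $L^2_p(K)$; (iii) the linear span of $\{\hat z_j\}$ is dense in $\tilde X_K$; (iv) $p\,\hat z_j\in\tilde X_K$ for all $j$; (v) $\Lambda_j:=1+k\lambda_j\neq 0$ for all $j$. Then $$\tilde U_K=\sum_{j=0}^{\infty}\beta_j\,\langle R,p\,\hat z_j\rangle\,\hat z_j,\qquad \beta_j=\Lambda_j^{-1}=(1+k\lambda_j)^{-1},$$ where the series converges in $L^2_p(K)$.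
   Context: For a measurable function $p$ on $K$ that is positive a.e., $L^2_p(K)=\{W:K\to\mathbb R \text{ measurable}: p|W|^2\in L^1(K)\}$ with inner product $(W_1,W_2)_p=\int_K p\,W_1W_2\,dx$. $(\cdot,\cdot)$ denotes the $L^2$ inner product. In the paper, $R$ is the residual $\langle R_n(U_h^{n+1}),\tilde V\rangle=l^{n+1}(\tilde V)-B_n(U_h^{n+1},\tilde V)$ of the large-scale component at time step $n$, and $\tilde U_K$ is the element sub-scale. *)

(* Defs.v *)
From HB Require Import structures.
From mathcomp Require Import all_boot all_order all_algebra.
From mathcomp Require Import all_classical all_reals all_analysis.
Set Implicit Arguments. Unset Strict Implicit. Unset Printing Implicit Defensive.
Import Order.TTheory GRing.Theory Num.Theory.
Import numFieldNormedType.Exports.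
Local Open Scope classical_set_scope.
Local Open Scope ring_scope.

Section Defs.
Context (R : realType) (dsp : measure_display) (T : measurableType dsp).
Implicit Types (X Y : set (T -> R)) (f g : T -> R).

Definition linear_subspace X :=
  X (fun _ => 0) /\ (forall (c : R) f g, X f -> X g -> X (fun x => c * f x + g x)).

Definition L2 (mu : {measure set T -> \bar R}) (D : set T) f :=
  measurable_fun D f /\ (\int[mu]_(x in D) ((f x) ^+ 2)%:E < +oo)%E.

Definition ip2 (mu : {measure set T -> \bar R}) (D : set T) f g :=
  Rintegral mu D (fun x => f x * g x).

Definition ipw (mu : {measure set T -> \bar R}) (D : set T) (p : T -> R) f g :=
  Rintegral mu D (fun x => p x * f x * g x).
Definition normw (mu : {measure set T -> \bar R}) (D : set T) (p : T -> R) f :=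
  Num.sqrt (ipw mu D p f f).

Definition ipnorm (ip : (T -> R) -> (T -> R) -> R) f := Num.sqrt (ip f f).

Definition hilbert_space X (ip : (T -> R) -> (T -> R) -> R) :=
  [/\ linear_subspace X,
      (forall f g, X f -> X g -> ip f g = ip g f),
      (forall (c : R) f g h, X f -> X g -> X h ->
          ip (fun x => c * f x + g x) h = c * ip f h + ip g h),
      (forall f, X f -> 0 <= ip f f) &
      (forall u : nat -> T -> R, (forall n, X (u n)) ->
         (forall e : R, 0 < e -> exists N : nat, forall m n, (N <= m)%N -> (N <= n)%N ->
             ipnorm ip (fun x => u m x - u n x) < e) ->
         exists l, X l /\
           (fun n => ipnorm ip (fun x => u n x - l x)) @ \oo --> (0 : R))].

Definition continuous_embedding (mu : {measure set T -> \bar R}) (Omega : set T)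
    X (ip : (T -> R) -> (T -> R) -> R) :=
  (forall f, X f -> L2 mu Omega f) /\
  exists C : R, forall f, X f -> ip2 mu Omega f f <= C * ip f f.

Definition bounded_bilinear X (ip : (T -> R) -> (T -> R) -> R)
    (a : (T -> R) -> (T -> R) -> R) :=
  [/\ (forall (c : R) f g h, X f -> X g -> X h ->
          a (fun x => c * f x + g x) h = c * a f h + a g h),
      (forall (c : R) f g h, X f -> X g -> X h ->
          a h (fun x => c * f x + g x) = c * a h f + a h g) &
      exists M : R, forall f g, X f -> X g ->
          `|a f g| <= M * ipnorm ip f * ipnorm ip g].

Definition Bn (mu : {measure set T -> \bar R}) (Omega : set T) (k : R)
    (a : (T -> R) -> (T -> R) -> R) f g :=
  ip2 mu Omega f g + k * a f g.

Definition coercive X (ip : (T -> R) -> (T -> R) -> R)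
    (B : (T -> R) -> (T -> R) -> R) :=
  exists alpha : R, 0 < alpha /\ forall f, X f -> alpha * ip f f <= B f f.

Definition closed_subspace X (ip : (T -> R) -> (T -> R) -> R) Y :=
  [/\ linear_subspace Y, Y `<=` X &
      forall (u : nat -> T -> R) l, (forall n, Y (u n)) -> X l ->
        (fun n => ipnorm ip (fun x => u n x - l x)) @ \oo --> (0 : R) -> Y l].

Definition supported_in (K : set T) f := forall x, ~ K x -> f x = 0.

Definition bounded_functional Y (ip : (T -> R) -> (T -> R) -> R)
    (F : (T -> R) -> R) :=
  (forall (c : R) f g, Y f -> Y g -> F (fun x => c * f x + g x) = c * F f + F g) /\
  exists C : R, forall f, Y f -> `|F f| <= C * ipnorm ip f.

Definition span_dense Y (ip : (T -> R) -> (T -> R) -> R) (z : nat -> T -> R) :=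
  forall f, Y f -> forall e : R, 0 < e ->
    exists (n : nat) (c : nat -> R),
      ipnorm ip (fun x => f x - \sum_(j < n) c j * z j x) < e.

End Defs.

(* Main.v *)
Require Import Defs.
From HB Require Import structures.
From mathcomp Require Import all_boot all_order all_algebra.
From mathcomp Require Import all_classical all_reals all_analysis.
From mathcomp Require Import ring lra measurable_realfun.
Set Implicit Arguments. Unset Strict Implicit. Unset Printing Implicit Defensive.
Import Order.TTheory GRing.Theory Num.Theory.
Import numFieldNormedType.Exports.
Local Open Scope classical_set_scope.
Local Open Scope ring_scope.

Definition lc {T : Type} {R : realType} (c : nat -> R) (z : nat -> T -> R) (N : nat) : T -> R :=
  fun x => \sum_(j < N) c j * z j x.

Definition linf {R : realType} {dsp : measure_display} {T : measurableType dsp}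
  (S : set (T -> R)) (L : (T -> R) -> R) :=
  forall (c : R) f g, S f -> S g -> L (fun x => c * f x + g x) = c * L f + L g.

Definition Bform {R : realType} {dsp : measure_display} {T : measurableType dsp}
  (S : set (T -> R)) (B : (T -> R) -> (T -> R) -> R) :=
  [/\ (forall h, S h -> linf S (fun f => B f h)),
      (forall f g, S f -> S g -> B f g = B g f) &
      (forall f, S f -> 0 <= B f f)].

Lemma ls0 (R : realType) dsp (T : measurableType dsp) (S : set (T -> R)) :
  linear_subspace S -> S (fun _ => 0).
Proof. by case. Qed.

Lemma lsC (R : realType) dsp (T : measurableType dsp) (S : set (T -> R)) c f g :
  linear_subspace S -> S f -> S g -> S (fun x => c * f x + g x).
Proof. by case=> _ h; apply: h. Qed.

Lemma lsZ (R : realType) dsp (T : measurableType dsp) (S : set (T -> R)) c f :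
  linear_subspace S -> S f -> S (fun x => c * f x).
Proof.
move=> hS sf; have -> : (fun x => c * f x) = (fun x => c * f x + (fun _ => 0) x).
  by apply: funext => x; rewrite addr0.
by apply: lsC => //; exact: ls0.
Qed.

Lemma lsB (R : realType) dsp (T : measurableType dsp) (S : set (T -> R)) f g :
  linear_subspace S -> S f -> S g -> S (fun x => f x - g x).
Proof.
move=> hS sf sg; have -> : (fun x => f x - g x) = (fun x => (-1) * g x + f x).
  by apply: funext => x; rewrite mulN1r addrC.
exact: lsC.
Qed.

Lemma lc0 (T : Type) (R : realType) c (z : nat -> T -> R) : lc c z 0 = (fun _ => 0).
Proof. by apply: funext => x; rewrite /lc big_ord0. Qed.

Lemma lcS (T : Type) (R : realType) c (z : nat -> T -> R) N :
  lc c z N.+1 = (fun x => c N * z N x + lc c z N x).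
Proof. by apply: funext => x; rewrite /lc big_ord_recr /= addrC. Qed.

Lemma lsS (R : realType) dsp (T : measurableType dsp) (S : set (T -> R)) c z N :
  linear_subspace S -> (forall j, S (z j)) -> S (lc c z N).
Proof.
move=> hS hz; elim: N => [|N IH]; first by rewrite lc0; exact: ls0.
by rewrite lcS; exact: lsC.
Qed.

Lemma linf0 (R : realType) dsp (T : measurableType dsp) (S : set (T -> R)) L :
  linear_subspace S -> linf S L -> L (fun _ => 0) = 0.
Proof.
move=> hS hL; have := hL 1 _ _ (ls0 hS) (ls0 hS).
have -> : (fun x : T => 1 * 0 + 0) = (fun _ => 0 :> R).
  by apply: funext => x; rewrite mulr0 addr0.
move=> e; lra.
Qed.

Lemma linfB (R : realType) dsp (T : measurableType dsp) (S : set (T -> R)) L f g :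
  linear_subspace S -> linf S L -> S f -> S g ->
  L (fun x => f x - g x) = L f - L g.
Proof.
move=> hS hL sf sg; have -> : (fun x => f x - g x) = (fun x => (-1) * g x + f x).
  by apply: funext => x; rewrite mulN1r addrC.
by rewrite hL // mulN1r addrC.
Qed.

Lemma linf_lc (R : realType) dsp (T : measurableType dsp) (S : set (T -> R)) L c z N :
  linear_subspace S -> linf S L -> (forall j, S (z j)) ->
  L (lc c z N) = \sum_(j < N) c j * L (z j).
Proof.
move=> hS hL hz; elim: N => [|N IH]; first by rewrite lc0 big_ord0 (linf0 hS hL).
rewrite lcS hL //; last exact: lsS.
by rewrite IH big_ord_recr /= addrC.
Qed.

Lemma cs1 (R : realType) dsp (T : measurableType dsp) (S : set (T -> R)) B f z0 :
  linear_subspace S -> Bform S B -> S f -> S z0 -> B z0 z0 = 1 ->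
  B f z0 ^+ 2 <= B f f.
Proof.
move=> hS [hl hs hp] sf sz hz.
set t := B f z0.
pose g := fun x => (- t) * z0 x + f x.
have sg : S g by exact: lsC.
have E1 := hl g sg (- t) z0 f sz sf; simpl in E1.
have E2 := hl z0 sz (- t) z0 f sz sf; simpl in E2.
have E3 := hl f sf (- t) z0 f sz sf; simpl in E3.
have h0 := hp g sg.
have a1 : B g g = - t * B z0 g + B f g by exact: E1.
have a2 : B z0 g = B g z0 by exact: hs.
have a3 : B g z0 = - t * B z0 z0 + B f z0 by exact: E2.
have a4 : B f g = B g f by exact: hs.
have a5 : B g f = - t * B z0 f + B f f by exact: E3.
have a6 : B z0 f = t by rewrite hs.
rewrite hz in a3; rewrite a6 in a5; rewrite -/t in a3.
rewrite a1 a2 a3 a4 a5 in h0.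
rewrite expr2; nra.
Qed.

Lemma orth_err (R : realType) dsp (T : measurableType dsp) (S : set (T -> R)) B z u N
  (j : 'I_N) :
  linear_subspace S -> Bform S B -> (forall j, S (z j)) ->
  (forall i j, B (z i) (z j) = if i == j then 1 else 0) -> S u ->
  B (fun x => u x - lc (fun i => B u (z i)) z N x) (z j) = 0.
Proof.
move=> hS [hl hs hp] hz hzz su.
rewrite (linfB hS (hl _ (hz j))) //; last exact: lsS.
rewrite (linf_lc _ _ hS (hl _ (hz j))) //.
rewrite (bigD1 j) //= hzz eqxx mulr1 big1 ?addr0 ?subrr // => i /negbTE hij.
by rewrite hzz (_ : (i : nat) == j = false) ?mulr0 //.
Qed.

Lemma bestapp (R : realType) dsp (T : measurableType dsp) (S : set (T -> R)) B z u d N :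
  linear_subspace S -> Bform S B -> (forall j, S (z j)) ->
  (forall i j, B (z i) (z j) = if i == j then 1 else 0) -> S u ->
  B (fun x => u x - lc (fun i => B u (z i)) z N x)
    (fun x => u x - lc (fun i => B u (z i)) z N x) <=
  B (fun x => u x - lc d z N x) (fun x => u x - lc d z N x).
Proof.
move=> hS hB hz hzz su; have [hl hs hp] := hB.
set cc := fun i => B u (z i).
set e := fun x => u x - lc cc z N x.
pose w := lc (fun j => cc j - d j) z N.
have se : S e by apply: lsB => //; exact: lsS.
have sw : S w by exact: lsS.
have -> : (fun x => u x - lc d z N x) = (fun x => 1 * w x + e x).
  apply: funext => x; rewrite /e /w /lc mul1r.
  rewrite /=.
  have -> : \sum_(j < N) (cc j - d j) * z j x =
    \sum_(j < N) cc j * z j x - \sum_(j < N) d j * z j x.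
    by rewrite -sumrB; apply: eq_bigr => i _; rewrite mulrBl.
  ring.
have hwe : B w e = 0.
  rewrite /w (linf_lc _ _ hS (hl _ se)) //.
  rewrite big1 // => i _; rewrite (hs (z i) e (hz i) se).
  by rewrite /e /cc (orth_err i hS hB hz hzz su) mulr0.
have sv : S (fun x => 1 * w x + e x) by exact: lsC.
have E1 := hl _ sv 1 w e sw se; simpl in E1.
have E2 := hl _ sw 1 w e sw se; simpl in E2.
have E3 := hl _ se 1 w e sw se; simpl in E3.
rewrite E1 (hs w) // (hs e) // E2 E3 (hs e w) // hwe.
have := hp w sw; lra.
Qed.

Lemma conv_err (R : realType) dsp (T : measurableType dsp) (S : set (T -> R)) B z u :
  linear_subspace S -> Bform S B -> (forall j, S (z j)) ->
  (forall i j, B (z i) (z j) = if i == j then 1 else 0) -> S u ->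
  (forall e : R, 0 < e -> exists n c,
     B (fun x => u x - lc c z n x) (fun x => u x - lc c z n x) < e) ->
  forall e : R, 0 < e -> exists N0 : nat, forall N, (N0 <= N)%N ->
  B (fun x => u x - lc (fun i => B u (z i)) z N x)
    (fun x => u x - lc (fun i => B u (z i)) z N x) < e.
Proof.
move=> hS hB hz hzz su hd e e0.
have [n [c hc]] := hd e e0.
exists n => N hnN.
pose d := fun j => if (j < n)%N then c j else 0.
have E : lc c z n = lc d z N.
  apply: funext => x; rewrite /lc (big_ord_widen N (fun j => c j * z j x) hnN).
  rewrite big_mkcond; apply: eq_bigr => i _; rewrite /d.
  by case: ifP => _ //; rewrite mul0r.
rewrite E in hc.
exact: le_lt_trans (bestapp d N hS hB hz hzz su) hc.
Qed.

Lemma intZ (R : realType) dsp (T : measurableType dsp) (mu : {measure set T -> \bar R})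
  (D : set T) (f : T -> R) (c : R) : measurable D ->
  mu.-integrable D (EFin \o f) -> mu.-integrable D (EFin \o (fun x => c * f x)).
Proof.
move=> mD hf; apply: (eq_integrable mD (fun x => (c%:E * (EFin \o f) x)%E)).
  by move=> x _ /=; rewrite EFinM.
exact: integrableZl.
Qed.

Lemma intD (R : realType) dsp (T : measurableType dsp) (mu : {measure set T -> \bar R})
  (D : set T) (f g : T -> R) : measurable D ->
  mu.-integrable D (EFin \o f) -> mu.-integrable D (EFin \o g) ->
  mu.-integrable D (EFin \o (fun x => f x + g x)).
Proof.
move=> mD hf hg; apply: (eq_integrable mD ((EFin \o f) \+ (EFin \o g))%E).
  by move=> x _ /=; rewrite EFinD.
exact: integrableD.
Qed.

Lemma sqint (R : realType) dsp (T : measurableType dsp) (mu : {measure set T -> \bar R})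
  (Omega : set T) (f : T -> R) : measurable Omega -> L2 mu Omega f ->
  mu.-integrable Omega (EFin \o (fun x => f x * f x)).
Proof.
move=> mO [mf fin]; apply/integrableP; split.
  by apply/measurable_EFinP; exact: measurable_funM.
apply: le_lt_trans fin; rewrite le_eqVlt; apply/orP; left; apply/eqP.
apply: eq_integral => x _; by rewrite /= -expr2 ger0_norm // sqr_ge0.
Qed.

Lemma pint (R : realType) dsp (T : measurableType dsp) (mu : {measure set T -> \bar R})
  (Omega K : set T) (p : T -> R) (Mp : R) (f g : T -> R) :
  measurable Omega -> measurable K -> K `<=` Omega -> measurable_fun K p ->
  (forall x, K x -> 0 < p x) -> (forall x, K x -> p x <= Mp) ->
  L2 mu Omega f -> L2 mu Omega g ->
  mu.-integrable K (EFin \o (fun x => p x * f x * g x)).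
Proof.
move=> mO mK KO mp pp pM hf hg.
have mfK : measurable_fun K f by exact: measurable_funS mO KO hf.1.
have mgK : measurable_fun K g by exact: measurable_funS mO KO hg.1.
have iF : mu.-integrable K (EFin \o (fun x => Mp * (f x * f x) + Mp * (g x * g x))).
  apply: intD => //; apply: intZ => //; apply: (integrableS mO mK KO); exact: sqint.
refine (le_integrable mK _ _ iF).
  apply/measurable_EFinP; apply: measurable_funM => //; exact: measurable_funM.
move=> x Kx; rewrite /= lee_fin.
have p0 := pp x Kx; have pm := pM x Kx.
rewrite -mulrA normrM (gtr0_norm p0) normrM.
have ha : `|f x| * `|f x| = f x * f x by rewrite -normrM ger0_norm // -expr2 sqr_ge0.
have hb : `|g x| * `|g x| = g x * g x by rewrite -normrM ger0_norm // -expr2 sqr_ge0.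
have na := normr_ge0 (f x); have nb := normr_ge0 (g x).
have h1 : 0 <= Mp * (f x * f x) + Mp * (g x * g x).
  rewrite -ha -hb; nra.
rewrite (ger0_norm h1) -ha -hb.
set a := `|f x|; set b := `|g x|.
have hab : a * b <= a * a + b * b by nra.
have Mp0 : 0 <= Mp by lra.
have e1 : p x * (a * b) <= Mp * (a * b) by apply: ler_wpM2r; [exact: mulr_ge0 | exact: pm].
have e2 : Mp * (a * b) <= Mp * (a * a + b * b) by apply: ler_wpM2l.
lra.
Qed.

Lemma ipw_Bform (R : realType) dsp (T : measurableType dsp) (mu : {measure set T -> \bar R})
  (Omega K : set T) (p : T -> R) (Mp : R) (X : set (T -> R)) :
  measurable Omega -> measurable K -> K `<=` Omega -> measurable_fun K p ->
  (forall x, K x -> 0 < p x) -> (forall x, K x -> p x <= Mp) ->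
  linear_subspace X -> (forall f, X f -> L2 mu Omega f) ->
  Bform X (ipw mu K p).
Proof.
move=> mO mK KO mp pp pM hX hL2; split.
- move=> h Xh c f g Xf Xg /=; rewrite /ipw.
  have Xcf : X (fun x => c * f x) by exact: lsZ.
  have -> : \int[mu]_(x in K) (p x * (c * f x + g x) * h x) =
            \int[mu]_(x in K) (p x * (c * f x) * h x + p x * g x * h x).
    by apply: eq_Rintegral => x _; ring.
  rewrite RintegralD //; [| exact: (pint mO mK KO mp pp pM (hL2 _ Xcf) (hL2 _ Xh))
                           | exact: (pint mO mK KO mp pp pM (hL2 _ Xg) (hL2 _ Xh))].
  have -> : \int[mu]_(x in K) (p x * (c * f x) * h x) =
            \int[mu]_(x in K) (c * (p x * f x * h x)).
    by apply: eq_Rintegral => x _; ring.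
  by rewrite RintegralZl //; exact: (pint mO mK KO mp pp pM (hL2 _ Xf) (hL2 _ Xh)).
- move=> f g _ _; rewrite /ipw; apply: eq_Rintegral => x _; ring.
- move=> f _; rewrite /ipw; apply: Rintegral_ge0 => x Kx.
  rewrite -mulrA; apply: mulr_ge0; [exact: ltW (pp x Kx) | by rewrite -expr2 sqr_ge0].
Qed.

Lemma ip2_res (R : realType) dsp (T : measurableType dsp) (mu : {measure set T -> \bar R})
  (Omega K : set T) (f g : T -> R) :
  K `<=` Omega -> supported_in K f -> ip2 mu Omega f g = ip2 mu K f g.
Proof.
move=> KO hf; rewrite /ip2 /Rintegral; congr fine.
rewrite (integral_mkcond Omega) (integral_mkcond K).
apply: eq_integral => x _; rewrite /patch.
case: (pselect (K x)) => Kx.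
  by rewrite (mem_set Kx) (mem_set (KO _ Kx)).
by rewrite (memNset Kx) hf // mul0r; case: (x \in Omega).
Qed.

Lemma ipw_le (R : realType) dsp (T : measurableType dsp) (mu : {measure set T -> \bar R})
  (Omega K : set T) (p : T -> R) (Mp : R) (f : T -> R) :
  measurable Omega -> measurable K -> K `<=` Omega -> measurable_fun K p ->
  (forall x, K x -> 0 < p x) -> (forall x, K x -> p x <= Mp) ->
  L2 mu Omega f -> supported_in K f ->
  ipw mu K p f f <= Mp * ip2 mu Omega f f.
Proof.
move=> mO mK KO mp pp pM hf sf.
have iK : mu.-integrable K (EFin \o (fun x => f x * f x)).
  by apply: (integrableS mO mK KO); exact: sqint.
rewrite (ip2_res _ _ KO sf) /ipw /ip2 -RintegralZl //.
apply: le_Rintegral => //.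
- exact: (pint mO mK KO mp pp pM hf hf).
- exact: intZ.
move=> x Kx; rewrite -mulrA; apply: ler_wpM2r; last exact: pM.
by rewrite -expr2 sqr_ge0.
Qed.

Lemma Blin (R : realType) dsp (T : measurableType dsp) (S : set (T -> R)) B c f g h :
  Bform S B -> S h -> S f -> S g ->
  B (fun x => c * f x + g x) h = c * B f h + B g h.
Proof. by case=> hl _ _ sh sf sg; exact: (hl h sh c f g sf sg). Qed.

Lemma small0 (R : realType) (x Kc : R) : 0 <= Kc ->
  (forall e : R, 0 < e -> `|x| <= Kc * e) -> x = 0.
Proof.
move=> K0 h; apply/eqP; apply/negPn/negP => xn0.
have xp : 0 < `|x| by rewrite normr_gt0.
have q0 : 0 < `|x| / (Kc + 1) by apply: divr_gt0 => //; lra.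
have := h _ q0.
have E : `|x| / (Kc + 1) * (Kc + 1) = `|x|.
  by rewrite divfK //; apply/lt0r_neq0; lra.
set q := `|x| / (Kc + 1) in q0 E *.
nra.
Qed.

Theorem theorem1 (R : realType) (dsp : measure_display) (T : measurableType dsp)
  (mu : {measure set T -> \bar R}) (Omega K : set T)
  (X : set (T -> R)) (ipX : (T -> R) -> (T -> R) -> R)
  (k : R) (a : (T -> R) -> (T -> R) -> R)
  (XK : set (T -> R)) (Rf : (T -> R) -> R) (UK : T -> R)
  (p : T -> R) (z : nat -> T -> R) (lam : nat -> R) :
  measurable Omega -> (mu Omega < +oo)%E ->
  hilbert_space X ipX -> continuous_embedding mu Omega X ipX ->
  0 < k -> bounded_bilinear X ipX a ->
  coercive X ipX (Bn mu Omega k a) ->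
  measurable K -> K `<=` Omega ->
  closed_subspace X ipX XK -> (forall V, XK V -> supported_in K V) ->
  bounded_functional XK ipX Rf ->
  XK UK -> (forall V, XK V -> Bn mu Omega k a UK V = Rf V) ->
  measurable_fun K p -> (forall x, K x -> 0 < p x) ->
  (exists M : R, forall x, K x -> p x <= M) ->
  (forall j, XK (z j)) ->
  (forall j V, XK V -> a (z j) V = lam j * ip2 mu K (z j) V) ->
  (forall i j, ipw mu K p (z i) (z j) = if i == j then 1 else 0) ->
  span_dense XK ipX z ->
  (forall j, XK (fun x => p x * z j x)) ->
  (forall j, 1 + k * lam j != 0) ->
  (fun N : nat => normw mu K p (fun x => UK x -
      \sum_(j < N) (1 + k * lam j)^-1 * Rf (fun y => p y * z j y) * z j x))
    @ \oo --> (0 : R).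
Proof.
move=> mO _ [hX _ _ hpos _] [hL2 [C hC]] _ [a1 _ [Ma hMa]] _ mK KO [hXK XKX _]
  supp _ XUK hUK mp pp [M pM] hz hzeig horth hdense hpz hLam.
pose Mp := Num.max M 1.
have Mp1 : 1 <= Mp by rewrite le_max lexx orbT.
have pMp : forall x, K x -> p x <= Mp.
  by move=> x Kx; rewrite le_max pM.
pose Cp := Num.max C 0.
have Cp0 : 0 <= Cp by rewrite le_max lexx orbT.
pose D := Mp * Cp.
have D0 : 0 <= D by apply: mulr_ge0 => //; lra.
pose B := ipw mu K p.
have hB : Bform X B := ipw_Bform mO mK KO mp pp pMp hX hL2.
have zX : forall j, X (z j) by move=> j; exact: XKX.
have UX : X UK by exact: XKX.
have hBle : forall f, XK f -> B f f <= D * ipX f f.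
  move=> f Xf.
  have h1 := ipw_le mO mK KO mp pp pMp (hL2 _ (XKX _ Xf)) (supp _ Xf).
  have h2 := hC _ (XKX _ Xf).
  have h3 := hpos _ (XKX _ Xf).
  have h4 : C * ipX f f <= Cp * ipX f f by apply: ler_wpM2r => //; rewrite le_max lexx.
  rewrite /D -mulrA; apply: (le_trans h1); apply: ler_wpM2l; first lra.
  exact: le_trans h2 h4.
pose cc := fun i => B UK (z i).
have errK : forall c n, XK (fun x => UK x - lc c z n x).
  by move=> c n; apply: lsB => //; exact: lsS.
have happ : forall e : R, 0 < e -> exists n c,
    B (fun x => UK x - lc c z n x) (fun x => UK x - lc c z n x) < e.
  move=> e e0.
  have q0 : 0 < e / (D + 1) by apply: divr_gt0 => //; lra.
  have [n [c hc]] := hdense UK XUK (Num.sqrt (e / (D + 1))) ltac:(by rewrite sqrtr_gt0).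
  exists n, c.
  have hc' : ipX (fun x => UK x - lc c z n x) (fun x => UK x - lc c z n x) < e / (D + 1).
    by rewrite -ltr_sqrt //; exact: hc.
  apply: (le_lt_trans (hBle _ (errK c n))).
  have E : e / (D + 1) * (D + 1) = e by rewrite divfK //; apply/lt0r_neq0; lra.
  set q := e / (D + 1) in q0 hc' E *.
  set t := ipX _ _ in hc' *.
  have t0 : 0 <= t by exact: hpos (XKX _ (errK c n)).
  nra.
have hcoef : forall j, (1 + k * lam j)^-1 * Rf (fun y => p y * z j y) = cc j.
  move=> j.
  pose w := fun y => p y * z j y.
  have Xw : X w by exact: XKX (hpz j).
  pose phi := fun f => a f w - lam j * B f (z j).
  have lphi : linf X phi.
    move=> c f g Xf Xg; rewrite /phi a1 // (Blin c hB (zX j) Xf Xg); ring.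
  have phiz : forall i, phi (z i) = 0.
    move=> i; rewrite /phi hzeig; last exact: hpz.
    have -> : ip2 mu K (z i) w = B (z i) (z j).
      by rewrite /ip2 /B /ipw; apply: eq_Rintegral => x _; rewrite /w; ring.
    rewrite /B horth; case: eqP => [-> | _]; ring.
  have phibound : forall f, XK f ->
      `|phi f| <= (Num.max Ma 0 * ipnorm ipX w + `|lam j| * Num.sqrt D) * ipnorm ipX f.
    move=> f Xf; have Xf' := XKX _ Xf.
    have n1 := hMa f w Xf' Xw.
    have nf : 0 <= ipnorm ipX f by exact: sqrtr_ge0.
    have nw : 0 <= ipnorm ipX w by exact: sqrtr_ge0.
    have n1' : `|a f w| <= Num.max Ma 0 * ipnorm ipX f * ipnorm ipX w.
      apply: (le_trans n1); apply: ler_wpM2r => //; apply: ler_wpM2r => //.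
      by rewrite le_max lexx.
    have cs := cs1 hX hB Xf' (zX j) _.
    rewrite /B horth eqxx in cs; have {}cs := cs erefl.
    have n2 : `|B f (z j)| <= Num.sqrt D * ipnorm ipX f.
      rewrite -sqrtr_sqr /ipnorm -sqrtrM //.
      rewrite ler_wsqrtr //; apply: (le_trans cs); exact: hBle.
    rewrite /phi; apply: (le_trans (ler_normB _ _)); rewrite normrM.
    have la := normr_ge0 (lam j).
    have n2' : `|lam j| * `|B f (z j)| <= `|lam j| * (Num.sqrt D * ipnorm ipX f).
      exact: ler_wpM2l.
    nra.
  have phiU : phi UK = 0.
    apply: (small0 (Kc := Num.max Ma 0 * ipnorm ipX w + `|lam j| * Num.sqrt D)).
      apply: addr_ge0; apply: mulr_ge0; rewrite ?le_max ?lexx ?orbT ?sqrtr_ge0 ?normr_ge0 //.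
    move=> e e0.
    have [n [c hc]] := hdense UK XUK e e0.
    have E : phi UK = phi (fun x => UK x - lc c z n x).
      rewrite (linfB hX lphi UX (lsS _ _ hX zX)) (linf_lc _ _ hX lphi zX).
      by rewrite big1 ?subr0 // => i _; rewrite phiz mulr0.
    rewrite E; apply: (le_trans (phibound _ (errK c n))).
    apply: ler_wpM2l; last exact: ltW hc.
    apply: addr_ge0; apply: mulr_ge0; rewrite ?le_max ?lexx ?orbT ?sqrtr_ge0 ?normr_ge0 //.
  have haw : a UK w = lam j * cc j by move: phiU; rewrite /phi /cc; lra.
  have hip : ip2 mu Omega UK w = cc j.
    rewrite (ip2_res _ _ KO (supp _ XUK)) /ip2 /cc /B /ipw.
    by apply: eq_Rintegral => x _; rewrite /w; ring.
  have hR : Rf w = (1 + k * lam j) * cc j.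
    by rewrite -hUK; last exact: hpz; rewrite /Bn hip haw; ring.
  by rewrite -/w hR mulKf.
have Efun : (fun N : nat => normw mu K p (fun x => UK x -
      \sum_(j < N) (1 + k * lam j)^-1 * Rf (fun y => p y * z j y) * z j x)) =
    (fun N : nat => Num.sqrt (B (fun x => UK x - lc cc z N x) (fun x => UK x - lc cc z N x))).
  apply: funext => N; rewrite /normw /B; congr (Num.sqrt (ipw mu K p _ _));
  apply: funext => x; rewrite /lc; congr (_ - _); apply: eq_bigr => i _; by rewrite hcoef.
rewrite Efun; apply/cvgrPdist_lt => e e0.
have [N0 hN0] := conv_err hX hB zX horth UX happ (mulr_gt0 e0 e0).
exists N0 => // N hN /=.
rewrite sub0r normrN ger0_norm ?sqrtr_ge0 //.
have := hN0 N hN; rewrite -/cc => h.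
rewrite -(ltr_sqrt _ (mulr_gt0 e0 e0)) in h.
by rewrite -expr2 sqrtr_sqr gtr0_norm in h.
Qed.
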